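(* Let $G$ be a simple graph and $S\subset V(G)$ a set of pairwise non-adjacent vertices. If $G$ is $k$-shellable, then $G\setminus N_G[S]$ is $k$-shellable.
   Context: $N_G[S]=\bigcup_{x\in S}(N_G(x)\cup\{x\})$, where $N_G(x)$ is the set of neighbours of $x$; $G\setminus U$ deletes the vertices of $U$ and incident edges. A graph $H$ is $k$-shellable if its independence complex $\Delta_H$ (faces: sets of pairwise non-adjacent vertices) is. $\langle F_1,\ldots,F_s\rangle$ denotes the complex with facets $F_1,\dots,F_s$. A complex $\Gamma$ of dimension $d$ is $k$-shellable ($1\le k\le d+1$) if its facets can be ordered $F_1,\ldots,F_r$ such that for every $j=2,\ldots,r$, $\Gamma_j=\langle F_j\rangle\cap\langle F_1,\ldots,F_{j-1}\rangle$ satisfies (i) $\Gamma_j$ is generated by a nonempty set of faces of $\langle F_j\rangle$ of dimension $|F_j|-k-1$; (ii) if $\Gamma_j$ has more than one facet, then for every two distinct facets $\sigma,\tau$ of $\Gamma_j$, $F_j\subseteq\sigma\cup\tau$. *)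

(* Defs.v *)
From mathcomp Require Import all_boot.
Set Implicit Arguments. Unset Strict Implicit. Unset Printing Implicit Defensive.

(* A simplicial complex on the finite ground type T is represented by its set
   of faces, a {set {set T}}. *)

Definition facets (T : finType) (D : {set {set T}}) : {set {set T}} :=
  [set F in D | [forall G in D, (F \subset G) ==> (G == F)]].

Definition gen_seq (T : finType) (s : seq {set T}) : {set {set T}} :=
  \bigcup_(F <- s) powerset F.

Definition gen_set (T : finType) (A : {set {set T}}) : {set {set T}} :=
  \bigcup_(F in A) powerset F.

(* k-shellability, as in the paper: an ordering F_1,...,F_r of the facets
   (here the list s, indexed from 0) such that for every j >= 2 the complex
   Gamma_j = <F_j> /\ <F_1,...,F_{j-1}> satisfies (i) and (ii).
   A face of dimension |F_j|-k-1 is a face of cardinality |F_j|-k, i.e. a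
   sigma with #|sigma| + k = #|F_j|. *)
Definition k_shellable (T : finType) (k : nat) (D : {set {set T}}) : Prop :=
  0 < k /\
  exists s : seq {set T},
    [/\ uniq s,
        (forall F, (F \in s) = (F \in facets D)) &
        forall j, 0 < j < size s ->
          let Fj := nth set0 s j in
          let Gam := powerset Fj :&: gen_seq (take j s) in
          (exists Gs : {set {set T}},
              [/\ Gs != set0,
                  (forall sg, sg \in Gs -> (sg \subset Fj) /\ #|sg| + k = #|Fj|) &
                  Gam = gen_set Gs]) /\
          (1 < #|facets Gam| ->
             forall sg tau, sg \in facets Gam -> tau \in facets Gam -> sg != tau ->
               Fj \subset sg :|: tau)].

(* A simple graph: vertex set V (a subset of the finite type T) and an
   adjacency relation e (assumed symmetric and irreflexive in the theorem). *)

Definition indep_complex (T : finType) (V : {set T}) (e : rel T) : {set {set T}} :=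
  [set F : {set T} | (F \subset V) &&
     [forall x in F, [forall y in F, ~~ e x y]]].

Definition nbhd (T : finType) (V : {set T}) (e : rel T) (x : T) : {set T} :=
  [set y in V | e x y].

Definition closed_nbhd (T : finType) (V : {set T}) (e : rel T) (S : {set T}) : {set T} :=
  \bigcup_(x in S) (x |: nbhd V e x).

(* G \ U is the graph (V :\: U, e) : induced subgraph on the remaining vertices *)

(* Main.v *)
Require Import Defs.
From mathcomp Require Import all_boot.
From mathcomp Require Import zify.

Section Aux.
Variable T : finType.
Implicit Types (A B F G S tau : {set T}) (D E : {set {set T}}).

Lemma DU_id S F : S \subset F -> (F :\: S) :|: S = F.
Proof.
move/subsetP=> SF; apply/setP=> x; rewrite !inE.
case xS: (x \in S) => /=; first by rewrite (SF _ xS) ?orbT.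
by rewrite ?orbF ?andbT.
Qed.

Lemma UD_id S F : [disjoint F & S] -> (F :|: S) :\: S = F.
Proof.
move=> dFS; rewrite setDUl setDv setU0; exact/setDidPl.
Qed.

Lemma facetsP D F :
  F \in facets D <-> F \in D /\ (forall G, G \in D -> F \subset G -> G = F).
Proof.
rewrite /facets inE; split.
  case/andP=> FD /forallP H; split=> // G GD FG.
  by move: (H G); rewrite GD FG /= => /eqP.
case=> FD H; rewrite FD /=; apply/forallP=> G; apply/implyP=> GD.
by apply/implyP=> FG; rewrite (H G GD FG).
Qed.

Lemma link_facets_a D E S :
  (forall tau, (tau \in E) = [disjoint tau & S] && (tau :|: S \in D)) ->
  forall F, F \in facets E -> [disjoint F & S] /\ F :|: S \in facets D.
Proof.
move=> key F /facetsP [FE H].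
have /andP [dFS FSD] : [disjoint F & S] && (F :|: S \in D) by rewrite -key.
split=> //; apply/facetsP; split=> // G GD FSG.
have SG : S \subset G by apply: subset_trans FSG; apply: subsetUr.
have GSE : G :\: S \in E.
  by rewrite key DU_id // GD andbT; apply/setDidPl; rewrite setDDl setUid.
have FGS : F \subset G :\: S.
  by rewrite subsetD dFS andbT; apply: subset_trans FSG; apply: subsetUl.
by rewrite -(H _ GSE FGS) DU_id.
Qed.

Lemma link_facets_b D E S :
  (forall tau, (tau \in E) = [disjoint tau & S] && (tau :|: S \in D)) ->
  forall F, F \in facets D -> S \subset F -> F :\: S \in facets E.
Proof.
move=> key F /facetsP [FD H] SF.
have dis : [disjoint F :\: S & S] by apply/setDidPl; rewrite setDDl setUid.
apply/facetsP; split; first by rewrite key dis DU_id.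
move=> G; rewrite key => /andP [dGS GSD] FSG.
have : F \subset G :|: S by rewrite -(DU_id S F SF); apply: setSU.
move/(H _ GSD) => E1.
by rewrite -E1 UD_id.
Qed.

Lemma gen_seqP tau (l : seq {set T}) :
  (tau \in gen_seq l) = has (fun F => tau \subset F) l.
Proof.
rewrite /gen_seq; elim: l => [|a l IH]; first by rewrite big_nil inE.
by rewrite big_cons inE powersetE IH.
Qed.

Lemma gen_setP tau D :
  (tau \in gen_set D) = [exists F in D, tau \subset F].
Proof.
rewrite /gen_set; apply/bigcupP/existsP.
  by case=> F FD; rewrite powersetE => H; exists F; rewrite FD.
by case=> F /andP [FD H]; exists F; rewrite ?powersetE.
Qed.

End Aux.
Arguments link_facets_a {T D E S}.
Arguments link_facets_b {T D E S}.
Arguments UD_id {T S F}.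

Lemma filter_take (X : Type) (P : pred X) (s : seq X) x0 j' :
  j' < size (filter P s) ->
  exists j, [/\ j < size s, nth x0 s j = nth x0 (filter P s) j' &
                take j' (filter P s) = filter P (take j s)].
Proof.
elim: s j' => [|a s IH] j' //=.
case Pa: (P a) => /=.
  case: j' => [|j'] /=; first by exists 0.
  move=> /IH [j [H1 H2 H3]]; exists j.+1; split=> //=.
  by rewrite Pa H3.
move=> /IH [j [H1 H2 H3]]; exists j.+1; split=> //=.
by rewrite Pa.
Qed.

Lemma indepP (T : finType) (V : {set T}) (e : rel T) (F : {set T}) :
  F \in indep_complex V e <->
  F \subset V /\ (forall x y, x \in F -> y \in F -> ~~ e x y).
Proof.
rewrite inE; split.
  case/andP=> FV /forallP H; split=> // x y xF yF.
  by move: (H x); rewrite xF /= => /forallP /(_ y); rewrite yF.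
case=> FV H; rewrite FV /=; apply/forallP=> x; apply/implyP=> xF.
by apply/forallP=> y; apply/implyP=> yF; apply: H.
Qed.

Lemma cnbhdP (T : finType) (V : {set T}) (e : rel T) (S : {set T}) x :
  reflect (exists2 y, y \in S & (x = y \/ (x \in V /\ e y x)))
          (x \in closed_nbhd V e S).
Proof.
apply: (iffP bigcupP).
  case=> y yS; rewrite !inE => /orP [/eqP ->|/andP [xV eyx]]; exists y => //.
    by left.
  by right.
case=> y yS H; exists y => //; rewrite !inE.
by case: H => [->|[-> ->]]; rewrite ?eqxx ?orbT.
Qed.

Lemma graph_key (T : finType) (V : {set T}) (e : rel T) (S : {set T}) :
  symmetric e -> S \subset V ->
  (forall x y, x \in S -> y \in S -> ~~ e x y) ->
  forall tau, (tau \in indep_complex (V :\: closed_nbhd V e S) e) =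
    [disjoint tau & S] && (tau :|: S \in indep_complex V e).
Proof.
move=> esym SV Sind tau; apply/idP/idP.
  move/indepP=> [tV tind].
  have tV' : forall x, x \in tau -> x \in V /\ x \notin closed_nbhd V e S.
    by move=> x /(subsetP tV); rewrite inE => /andP [].
  apply/andP; split.
    apply/pred0P => x /=; apply/negbTE/negP => /andP [xt xS].
    case: (tV' x xt) => _ /cnbhdP; apply; exists x => //; by left.
  apply/indepP; split.
    by rewrite subUset SV andbT; apply/subsetP => x /tV' [].
  move=> x y; rewrite !inE => /orP [xt|xS] /orP [yt|yS].
  - exact: tind.
  - apply/negP => exy; case: (tV' x xt) => xV /cnbhdP; apply; exists y => //.
    by right; rewrite esym.
  - apply/negP => exy; case: (tV' y yt) => yV /cnbhdP; apply; exists x => //.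
    by right.
  - exact: Sind.
case/andP=> dis /indepP [tSV tSind].
have tS : forall x, x \in tau -> x \in tau :|: S by move=> x xt; rewrite inE xt.
apply/indepP; split; last by move=> x y xt yt; apply: tSind; apply: tS.
apply/subsetP=> x xt; rewrite inE.
have -> : x \in V by apply: (subsetP tSV); apply: tS.
rewrite andbT; apply/cnbhdP => [[y yS [xy|[_ eyx]]]].
  by move: dis => /pred0P /(_ x) /=; rewrite xt xy yS.
have : ~~ e y x by apply: tSind; [rewrite inE yS orbT | exact: tS].

by rewrite eyx.
Qed.

Theorem corollary4p5 (T : finType) (V : {set T}) (e : rel T) (S : {set T}) (k : nat) :
  symmetric e -> irreflexive e ->
  S \subset V ->
  (forall x y, x \in S -> y \in S -> ~~ e x y) ->
  k_shellable k (indep_complex V e) ->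
  k_shellable k (indep_complex (V :\: closed_nbhd V e S) e).
Proof.
move=> esym _ SV Sind [k0 [s [us sfac hs]]]; split=> //.
have gkey := @graph_key T V e S esym SV Sind.
set P := [pred F : {set T} | S \subset F].
set f := fun F : {set T} => F :\: S.
exists (map f (filter P s)); split.
- rewrite map_inj_in_uniq ?filter_uniq // => F G.
  rewrite !mem_filter => /andP [PF _] /andP [PG _] E.
  by rewrite -(@DU_id T S F PF) -(@DU_id T S G PG) -/(f F) E.
- move=> F; apply/mapP/idP.
    case=> F0; rewrite mem_filter => /andP [PF0 F0s] ->.
    by apply: link_facets_b => //; rewrite -sfac.
  move=> /(link_facets_a gkey) [dis FS]; exists (F :|: S).
    by rewrite mem_filter sfac FS andbT /= subsetUr.
  by rewrite /f UD_id.
move=> j'; rewrite size_map => /andP [j'0 j'lt].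
have [j [jlt nthj takej]] := @filter_take _ P s set0 j' j'lt.
cbv zeta.
rewrite (nth_map set0) // -map_take takej -nthj.
set Fj0 := nth set0 s j.
have PFj0 : S \subset Fj0 by have := mem_nth set0 j'lt; rewrite -nthj mem_filter => /andP [].
have [F1 F1in] : exists F1, F1 \in filter P (take j s).
  exists (nth set0 (take j' (filter P s)) 0); rewrite -takej; apply: mem_nth.
  by rewrite size_take j'lt.
have j0 : 0 < j by case: j {takej nthj jlt Fj0 PFj0} F1in => //; rewrite take0.
move: F1in; rewrite mem_filter => /andP [PF1 F1t].
have := hs j; rewrite j0 jlt => /(_ isT); cbv zeta; rewrite -/Fj0.
set Gam := powerset Fj0 :&: gen_seq (take j s).
move=> [[Gs [Gs0 Gssz GamE]] H2].
have key : forall tau, (tau \in powerset (f Fj0) :&: gen_seq (map f (filter P (take j s))))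
   = [disjoint tau & S] && (tau :|: S \in Gam).
  move=> tau; rewrite !inE ?powersetE !gen_seqP has_map subsetD subUset PFj0 andbT.
  apply/idP/idP.
    case/andP => /andP [tF dis] /hasP [F]; rewrite mem_filter /= => /andP [SF Ft].
    rewrite /f subsetD => /andP [tF' _].
    rewrite dis tF /=; apply/hasP; exists F => //; by rewrite subUset tF' SF.
  case/andP => dis /andP [tF /hasP [F Ft]]; rewrite subUset => /andP [tF' SF].
  rewrite tF dis /=; apply/hasP; exists F; first by rewrite mem_filter /= SF Ft.
  by rewrite /= /f subsetD tF' dis.
have SGam : S \in Gam.
  rewrite !inE ?powersetE PFj0 gen_seqP /=; apply/hasP; by exists F1.
split.
  exists (f @: [set sg in Gs | S \subset sg]); split.
  - move: SGam; rewrite GamE gen_setP => /existsP [sg /andP [sgGs Ssg]].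
    apply/set0Pn; exists (f sg); apply/imsetP; exists sg => //; by rewrite inE sgGs.
  - move=> sg' /imsetP [sg]; rewrite inE => /andP [sgGs Ssg] ->.
    have [sgF szs] := Gssz sg sgGs.
    split; first by apply: setSD.
    rewrite /f !cardsDS //.
    have : #|S| <= #|sg| by apply: subset_leq_card.
    move: szs; clear; lia.
  - apply/setP => tau; rewrite key GamE !gen_setP.
    apply/andP/existsP.
      case=> dis /existsP [sg /andP [sgGs tSsg]]; exists (f sg).
      move: tSsg; rewrite subUset => /andP [tsg Ssg].
      apply/andP; split; first by apply/imsetP; exists sg; rewrite ?inE ?sgGs.
      by rewrite /f subsetD tsg dis.
    case=> sg' /andP [/imsetP [sg]]; rewrite inE => /andP [sgGs Ssg] ->.
    rewrite /f subsetD => /andP [tsg dis]; split=> //.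
    by apply/existsP; exists sg; rewrite sgGs subUset tsg Ssg.
move=> gt1 sg tau sgF tauF sgtau.
have [dsg sgS] := link_facets_a key _ sgF.
have [dtau tauS] := link_facets_a key _ tauF.
have ne : sg :|: S != tau :|: S.
  by apply: contra sgtau => /eqP E; rewrite -(UD_id dsg) E UD_id.
have := H2 _ (sg :|: S) (tau :|: S) sgS tauS ne.
have -> : 1 < #|facets Gam| by apply/card_gt1P; exists (sg :|: S), (tau :|: S).
move=> /(_ isT) /subsetP sub; apply/subsetP => x; rewrite inE => /andP [xS xF].
by move: (sub x xF); rewrite !inE (negbTE xS) !orbF.
Qed.
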